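(* Every satisfiable $\mathsf{BST}^{\otimes}$-conjunction with $n$ variables is fulfilled by an accessible $\otimes$-graph of size at most $2^{n}-1$.
   Context: Sets range over the von Neumann universe of well-founded sets. For sets $s,t$, $s\otimes t=\{\{u,v\} : u\in s,\ v\in t\}$. A $\mathsf{BST}^{\otimes}$-conjunction is a finite conjunction of literals of the forms $x=y\cup z$, $x=y\setminus z$, $x=y\otimes z$, $x\neq y$; it is satisfiable if some set assignment $M$ makes all literals true when each variable $v$ is interpreted as $Mv$. A $\otimes$-graph $\mathcal G=(\mathcal P,\mathcal N,\mathcal T)$ consists of a set $\mathcal P$ of places, the set of nodes $\mathcal N=\mathcal P\otimes\mathcal P$ (the nonempty subsets of $\mathcal P$ with at most two elements), $\mathcal P\cap\mathcal N=\emptyset$, and a target map $\mathcal T:\mathcal N\to\mathcal P(\mathcal P)$; its size is $|\mathcal P|$. A source place is a place belonging to no $\mathcal T(A)$. The accessible places form the smallest set of places containing all source places and containing $\mathcal T(A)$ whenever all places of the node $A$ belong to it; $\mathcal G$ is accessible if every place is accessible. A map $\mathfrak F:\mathrm{Vars}(\Phi)\to\mathcal P(\mathcal P)$ is $\mathcal G$-fulfilling for $\Phi$ if: (a) $\mathfrak F(x)=\mathfrak F(y)\star\mathfrak F(z)$ for each conjunct $x=y\star z$, $\star\in\{\cup,\setminus\}$; (b) $\mathfrak F(x)\neq\mathfrak F(y)$ for each conjunct $x\neq y$; (c) for each conjunct $x=y\otimes z$: (c1) $\emptyset\neq\mathcal T(\{\upsilon,\zeta\})\subseteq\mathfrak F(x)$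 for all $\upsilon\in\mathfrak F(y),\zeta\in\mathfrak F(z)$; (c2) $\mathfrak F(x)\subseteq\bigcup\{\mathcal T(A):A\in\mathfrak F(y)\otimes\mathfrak F(z)\}$; (c3) $\bigcup\{\mathcal T(A):A\in\mathcal N\setminus(\mathfrak F(y)\otimes\mathfrak F(z))\}\cap\mathfrak F(x)=\emptyset$. $\mathcal G$ fulfills $\Phi$ if such a map exists. *)

(* Defs.v *)
From Stdlib Require List.
From mathcomp Require Import all_boot.
Set Implicit Arguments. Unset Strict Implicit. Unset Printing Implicit Defensive.

(* ---------- Well-founded sets: Aczel's model of the cumulative hierarchy ---------- *)
Inductive V : Type := sup (A : Type) (f : A -> V).

(* extensional equality of sets (bisimulation) *)
Fixpoint Veq (x y : V) {struct x} : Prop :=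
  match x, y with
  | sup A f, sup B g =>
      (forall a : A, exists b : B, Veq (f a) (g b)) /\
      (forall b : B, exists a : A, Veq (f a) (g b))
  end.

Definition Vin (x y : V) : Prop :=
  match y with sup B g => exists b : B, Veq x (g b) end.

Definition VisPair (w u v : V) : Prop :=
  forall t, Vin t w <-> (Veq t u \/ Veq t v).

Inductive literal : Type :=
  | LUnion  (x y z : nat)   (* x = y \cup z *)
  | LDiff   (x y z : nat)   (* x = y \setminus z *)
  | LOtimes (x y z : nat)   (* x = y \otimes z *)
  | LNeq    (x y : nat).

Definition conjunction := seq literal.

Definition lit_vars (l : literal) : seq nat :=
  match l with
  | LUnion x y z | LDiff x y z | LOtimes x y z => [:: x; y; z]
  | LNeq x y => [:: x; y]
  end.

Definition vars (Phi : conjunction) : seq nat := undup (flatten (map lit_vars Phi)).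

Definition lit_holds (M : nat -> V) (l : literal) : Prop :=
  match l with
  | LUnion x y z => forall w, Vin w (M x) <-> (Vin w (M y) \/ Vin w (M z))
  | LDiff x y z => forall w, Vin w (M x) <-> (Vin w (M y) /\ ~ Vin w (M z))
  | LOtimes x y z => forall w, Vin w (M x) <->
        exists u v, Vin u (M y) /\ Vin v (M z) /\ VisPair w u v
  | LNeq x y => ~ Veq (M x) (M y)
  end.

Definition satisfiable (Phi : conjunction) : Prop :=
  exists M : nat -> V, forall l, List.In l Phi -> lit_holds M l.

(* Places form a finite type P; nodes are the subsets A of P with 1 <= |A| <= 2;
   the target map is T : {set P} -> {set P}, of which only the values on nodes matter. *)
Definition is_node (P : finType) (A : {set P}) : bool := (0 < #|A| <= 2)%N.

Definition set_otimes (P : finType) (S1 S2 : {set P}) : {set {set P}} :=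
  [set [set u; v] | u in S1, v in S2].

Definition source_place (P : finType) (T : {set P} -> {set P}) (p : P) : Prop :=
  forall A : {set P}, is_node A -> p \notin T A.

Definition accessible_place (P : finType) (T : {set P} -> {set P}) (p : P) : Prop :=
  forall S : {set P},
    (forall q, source_place T q -> q \in S) ->
    (forall A : {set P}, is_node A -> A \subset S -> T A \subset S) ->
    p \in S.

Definition accessible_graph (P : finType) (T : {set P} -> {set P}) : Prop :=
  forall p : P, accessible_place T p.

Definition lit_fulfilled (P : finType) (T : {set P} -> {set P}) (F : nat -> {set P})
    (l : literal) : Prop :=
  match l with
  | LUnion x y z => F x = F y :|: F z
  | LDiff x y z => F x = F y :\: F z
  | LNeq x y => F x <> F y
  | LOtimes x y z =>
      (forall u v, u \in F y -> v \in F z ->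
         T [set u; v] != set0 /\ T [set u; v] \subset F x) /\
      (F x \subset \bigcup_(A in set_otimes (F y) (F z)) T A) /\
      (forall A : {set P}, is_node A -> A \notin set_otimes (F y) (F z) ->
         [disjoint T A & F x])
  end.

Definition fulfills (P : finType) (T : {set P} -> {set P}) (Phi : conjunction) : Prop :=
  exists F : nat -> {set P}, forall l, List.In l Phi -> lit_fulfilled T F l.

(* Main.v *)
Require Import Defs.
From mathcomp Require Import all_boot.
From Stdlib Require Import ClassicalEpsilon Classical.
Set Implicit Arguments. Unset Strict Implicit. Unset Printing Implicit Defensive.

Lemma Veq_refl x : Veq x x.
Proof. elim: x => A f IH /=; split=> a; exists a; exact: IH. Qed.

Lemma Veq_sym x y : Veq x y -> Veq y x.
Proof.
elim: x y => A f IH [B g] /= [H1 H2]; split.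
- move=> b; have [a Ha] := H2 b; exists a; exact: IH.
- move=> a; have [b Hb] := H1 a; exists b; exact: IH.
Qed.

Lemma Veq_trans x y z : Veq x y -> Veq y z -> Veq x z.
Proof.
elim: x y z => A f IH [B g] [C h] /= [H1 H2] [H3 H4]; split.
- move=> a; have [b Hb] := H1 a; have [c Hc] := H3 b; exists c; exact: IH Hb Hc.
- move=> c; have [b Hb] := H4 c; have [a Ha] := H2 b; exists a; exact: IH Ha Hb.
Qed.

Lemma Vin_eql x x' y : Veq x x' -> Vin x y -> Vin x' y.
Proof.
case: y => B g /= H [b Hb]; exists b; apply: Veq_trans Hb; exact: Veq_sym.
Qed.

Lemma Vin_eqr x y y' : Veq y y' -> Vin x y -> Vin x y'.
Proof.
case: y y' => A f [B g] /= [H1 H2] [a Ha]; have [b Hb] := H1 a; exists b.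
exact: Veq_trans Ha Hb.
Qed.

Lemma Vext X Y : (forall w, Vin w X <-> Vin w Y) -> Veq X Y.
Proof.
case: X Y => A f [B g] H /=; split.
- move=> a; have /H [b Hb] : Vin (f a) (sup f) by exists a; exact: Veq_refl.
  by exists b.
- move=> b; have /H [a Ha] : Vin (g b) (sup g) by exists b; exact: Veq_refl.
  by exists a; apply: Veq_sym.
Qed.

Definition vpair (u v : V) : V := sup (fun b : bool => if b then u else v).

Lemma vpairP u v : VisPair (vpair u v) u v.
Proof.
move=> t; split.
- by case=> [[]] H; [left|right].
- by case=> H; [exists true|exists false].
Qed.

Lemma pair_inv w u v u' v' : VisPair w u v -> VisPair w u' v' ->
  (Veq u u' /\ Veq v v') \/ (Veq u v' /\ Veq v u').
Proof.
move=> H H'.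
have hu : Vin u w by apply/H; left; exact: Veq_refl.
have hv : Vin v w by apply/H; right; exact: Veq_refl.
have hu' : Vin u' w by apply/H'; left; exact: Veq_refl.
have hv' : Vin v' w by apply/H'; right; exact: Veq_refl.
case: (proj1 (H' u) hu) => Eu; case: (proj1 (H' v) hv) => Ev.
- case: (proj1 (H v') hv') => Ev'.
  + left; split => //; apply: Veq_trans Ev (Veq_trans (Veq_sym Eu) (Veq_sym Ev')).
  + by left; split => //; apply: Veq_sym.
- by left.
- by right.
- case: (proj1 (H u') hu') => Eu'.
  + right; split => //; apply: Veq_trans Ev (Veq_trans (Veq_sym Eu) (Veq_sym Eu')).
  + by right; split => //; apply: Veq_sym.
Qed.


Lemma card_nz n : #|{: {s : {set 'I_n} | s != set0}}| = (2^n - 1)%N.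
Proof.
rewrite card_sig.
have -> : #|[pred s : {set 'I_n} | s != set0]| = #|predC1 (set0 : {set 'I_n})| by [].
rewrite cardC1 -cardsT -powersetT card_powerset cardsT card_ord subn1 //.
Qed.

Definition bP (P : Prop) : bool := if excluded_middle_informative P then true else false.
Lemma bPP P : reflect P (bP P).
Proof. by rewrite /bP; case: excluded_middle_informative => h; constructor. Qed.

Lemma set2_inv (T : finType) (a b c d : T) : [set a; b] = [set c; d] ->
  (a = c /\ b = d) \/ (a = d /\ b = c).
Proof.
move=> E.
have ha : a \in [set c; d] by rewrite -E set21.
have hb : b \in [set c; d] by rewrite -E set22.
have hc : c \in [set a; b] by rewrite E set21.
have hd : d \in [set a; b] by rewrite E set22.
case/set2P: ha => ea; case/set2P: hb => eb; subst.
- by case/set2P: hd => ->; left.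
- by left.
- by right.
- by case/set2P: hc => ->; left.
Qed.

Lemma lit_in Phi l v : List.In l Phi -> v \in lit_vars l -> v \in vars Phi.
Proof.
rewrite /vars mem_undup; elim: Phi => //= l' Phi IH [<-|H] hv; rewrite mem_cat.
- by rewrite hv.
- by rewrite IH ?orbT.
Qed.

Definition nv Phi := size (vars Phi).
Definition reg Phi (M : nat -> V) w : {set 'I_(nv Phi)} :=
  [set i : 'I_(nv Phi) | bP (Vin w (M (nth 0 (vars Phi) i)))].
Notation Pl Phi := {s : {set 'I_(nv Phi)} | s != set0}.

Lemma reg_eq Phi M w w' : Veq w w' -> reg Phi M w = reg Phi M w'.
Proof.
move=> E; apply/setP => i; rewrite !inE; apply/bPP/bPP => H.
- exact: Vin_eql H.
- exact: Vin_eql (Veq_sym E) H.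
Qed.

Lemma regdet Phi M x w w' : x \in vars Phi -> reg Phi M w = reg Phi M w' ->
  Vin w (M x) -> Vin w' (M x).
Proof.
move=> hx E Hw.
have hi : index x (vars Phi) < nv Phi by rewrite index_mem.
have e : nth 0 (vars Phi) (Ordinal hi) = x by rewrite /= nth_index.
have : Ordinal hi \in reg Phi M w by rewrite inE e; apply/bPP.
by rewrite E inE e => /bPP.
Qed.

Lemma reg_place Phi M x w : x \in vars Phi -> Vin w (M x) ->
  exists r : Pl Phi, val r = reg Phi M w.
Proof.
move=> hx Hw.
have hi : index x (vars Phi) < nv Phi by rewrite index_mem.
have e : nth 0 (vars Phi) (Ordinal hi) = x by rewrite /= nth_index.
have H : reg Phi M w != set0.
  by apply/set0Pn; exists (Ordinal hi); rewrite inE e; apply/bPP.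
by exists (exist _ (reg Phi M w) H).
Qed.

Definition Fm Phi M x : {set Pl Phi} :=
  [set r | bP (exists w, val r = reg Phi M w /\ Vin w (M x))].

Lemma inF Phi M x r : reflect (exists w, val r = reg Phi M w /\ Vin w (M x)) (r \in Fm Phi M x).
Proof. rewrite inE; exact: bPP. Qed.

Definition Tg Phi M (A : {set Pl Phi}) : {set Pl Phi} :=
  [set r | bP (exists x y z w u v (s t : Pl Phi), List.In (LOtimes x y z) Phi /\
     Vin w (M x) /\ VisPair w u v /\ val r = reg Phi M w /\ val s = reg Phi M u /\
     val t = reg Phi M v /\ A = [set s; t])].

Arguments Tg : clear implicits.
Arguments Fm : clear implicits.
Arguments reg : clear implicits.

Lemma inT Phi M A r : reflect (exists x y z w u v (s t : Pl Phi), List.In (LOtimes x y z) Phi /\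
     Vin w (M x) /\ VisPair w u v /\ val r = reg Phi M w /\ val s = reg Phi M u /\
     val t = reg Phi M v /\ A = [set s; t]) (r \in Tg Phi M A).
Proof. rewrite inE; exact: bPP. Qed.

Lemma VisPair_sym w u v : VisPair w u v -> VisPair w v u.
Proof. by move=> H t; rewrite H; split; case; [right|left|right|left]. Qed.

Theorem mainTheorem9 (Phi : conjunction) :
  satisfiable Phi ->
  exists (P : finType) (T : {set P} -> {set P}),
    (#|P| <= 2 ^ size (vars Phi) - 1)%N /\ accessible_graph T /\ fulfills T Phi.
Proof.
move=> [M HM].
exists (Pl Phi), (Tg Phi M); split; [|split].
- by rewrite card_nz.
- move=> p S Hsrc Hcl.
  have ex_node : forall r, ~ source_place (Tg Phi M) r ->
      exists A, is_node A /\ r \in Tg Phi M A.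
    move=> r hs; apply: NNPP => hn; apply: hs => A hA; apply/negP => hr.
    by apply: hn; exists A.
  have Q : forall w (r : Pl Phi), val r = reg Phi M w -> r \in S.
    elim=> B g IH r Er.
    case: (classic (source_place (Tg Phi M) r)) => [hs|hs]; first exact: Hsrc.
    have [A [hA hr]] := ex_node r hs.
    case/inT: hr => [x [y [z [w [u [v [s [t [Hl [Hw [Hp [Er' _]]]]]]]]]]]].
    have hx : x \in vars Phi by apply: (lit_in Hl); rewrite !inE eqxx.
    have hy : y \in vars Phi by apply: (lit_in Hl); rewrite !inE eqxx !orbT.
    have hz : z \in vars Phi by apply: (lit_in Hl); rewrite !inE eqxx !orbT.
    have Hw0 : Vin (sup g) (M x) by apply: regdet hx _ Hw; rewrite -Er' Er.
    have H := HM _ Hl; simpl in H.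
    case: (proj1 (H (sup g)) Hw0) => u0 [v0 [Hu [Hv Hp0]]].
    have [s0 Es0] := reg_place hy Hu.
    have [t0 Et0] := reg_place hz Hv.
    have hs0 : s0 \in S.
      have : Vin u0 (sup g) by apply/Hp0; left; exact: Veq_refl.
      case=> b Eb; apply: (IH b); rewrite Es0; exact: reg_eq.
    have ht0 : t0 \in S.
      have : Vin v0 (sup g) by apply/Hp0; right; exact: Veq_refl.
      case=> b Eb; apply: (IH b); rewrite Et0; exact: reg_eq.
    have sub : [set s0; t0] \subset S by apply/subsetP => q; case/set2P => ->.
    have node : is_node [set s0; t0] by rewrite /is_node cards2; case: (s0 != t0).
    apply: (subsetP (Hcl _ node sub)); apply/inT.
    by exists x, y, z, (sup g), u0, v0, s0, t0.
  case: (classic (source_place (Tg Phi M) p)) => [hs|hs]; first exact: Hsrc.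
  have [A [hA hr]] := ex_node p hs.
  case/inT: hr => [x [y [z [w [u [v [s [t [Hl [Hw [Hp [Er' _]]]]]]]]]]]].
  exact: Q Er'.
- exists (Fm Phi M) => l Hl.
  have Hv := lit_in Hl; move: (HM l Hl).
  case: l Hl Hv => [x y z|x y z|x y z|x y] Hl Hv /= H.
  + apply/setP => r; rewrite in_setU; apply/idP/orP.
    * case/inF=> w [Ew Hw]; case: (proj1 (H w) Hw) => h; [left|right];
        by apply/inF; exists w.
    * by case=> /inF [w [Ew Hw]]; apply/inF; exists w; split=> //; apply/H; [left|right].
  + have hz : z \in vars Phi by apply: Hv; rewrite !inE eqxx !orbT.
    apply/setP => r; rewrite in_setD andbC; apply/idP/andP.
    * case/inF=> w [Ew Hw]; case: (proj1 (H w) Hw) => h1 h2; split.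
      - by apply/inF; exists w.
      - apply/negP => /inF [w' [Ew' Hw']]; apply: h2.
        by apply: regdet hz _ Hw'; rewrite -Ew'.
    * case=> /inF [w [Ew Hw]] /negP h; apply/inF; exists w; split=> //; apply/H; split=> // Hz.
      by apply: h; apply/inF; exists w.
  + have hx : x \in vars Phi by apply: Hv; rewrite !inE eqxx.
    have hy : y \in vars Phi by apply: Hv; rewrite !inE eqxx !orbT.
    have hz : z \in vars Phi by apply: Hv; rewrite !inE eqxx !orbT.
    split; [|split].
    * move=> s t /inF [u [Eu Hu]] /inF [v [Ev Hv']].
      have Hw : Vin (vpair u v) (M x).
        by apply/H; exists u, v; split; [|split] => //; exact: vpairP.
      have [r Er] := reg_place hx Hw.
      have rT : r \in Tg Phi M [set s; t].
        apply/inT; exists x, y, z, (vpair u v), u, v, s, t.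
        by split => //; split => //; split; [exact: vpairP|].
      split; first by apply/set0Pn; exists r.
      apply/subsetP => r' /inT [x' [y' [z' [w [u' [v' [s' [t' [Hl' [Hw' [Hp [Er' [Es' [Et' E]]]]]]]]]]]]]].
      apply/inF; exists w; split => //; apply/H.
      case: (set2_inv E) => [[es et]|[es et]]; subst s' t'.
      - exists u', v'; split; [|split] => //.
        + by apply: regdet hy _ Hu; rewrite -Eu Es'.
        + by apply: regdet hz _ Hv'; rewrite -Ev Et'.
      - exists v', u'; split; [|split]; last exact: VisPair_sym.
        + by apply: regdet hy _ Hu; rewrite -Eu Et'.
        + by apply: regdet hz _ Hv'; rewrite -Ev Es'.
    * apply/subsetP => r /inF [w [Ew Hw]].
      case: (proj1 (H w) Hw) => u [v [Hu [Hv' Hp]]].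
      have [s Es] := reg_place hy Hu.
      have [t Et] := reg_place hz Hv'.
      apply/bigcupP; exists [set s; t].
      - by apply: imset2_f; apply/inF; [exists u|exists v].
      - by apply/inT; exists x, y, z, w, u, v, s, t.
    * move=> A hA hA'; rewrite -setI_eq0; apply/set0Pn => -[r]; rewrite inE => /andP [].
      move=> /inT [x' [y' [z' [w [u [v [s [t [Hl' [Hw' [Hp [Er' [Es [Et E]]]]]]]]]]]]]].
      move=> /inF [w0 [Ew0 Hw0]].
      have Hw : Vin w (M x) by apply: regdet hx _ Hw0; rewrite -Ew0 Er'.
      case: (proj1 (H w) Hw) => u0 [v0 [Hu0 [Hv0 Hp0]]].
      apply: (negP hA'); rewrite E.
      case: (pair_inv Hp Hp0) => [[Eu Ev]|[Eu Ev]].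
      - apply: imset2_f; apply/inF; [exists u0|exists v0]; split => //.
        + by rewrite Es; apply: reg_eq.
        + by rewrite Et; apply: reg_eq.
      - rewrite setUC; apply: imset2_f; apply/inF; [exists u0|exists v0]; split => //.
        + by rewrite Et; apply: reg_eq.
        + by rewrite Es; apply: reg_eq.
  + move=> E; apply: H; apply: Vext => w.
    have hx : x \in vars Phi by apply: Hv; rewrite !inE eqxx.
    have hy : y \in vars Phi by apply: Hv; rewrite !inE eqxx !orbT.
    split => Hw.
    * have [r Er] := reg_place hx Hw.
      have : r \in Fm Phi M x by apply/inF; exists w.
      rewrite E => /inF [w' [Ew' Hw']].
      by apply: regdet hy _ Hw'; rewrite -Ew'.
    * have [r Er] := reg_place hy Hw.
      have : r \in Fm Phi M y by apply/inF; exists w.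
      rewrite -E => /inF [w' [Ew' Hw']].
      by apply: regdet hx _ Hw'; rewrite -Ew'.
Qed.
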